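(* Let $\mathbb{T}$ be a time scale, $a,b\in\mathbb{T}$ with $a<b$, $B\in\mathbb{R}$, and let $\varphi:[a,b]^\kappa_{\mathbb{T}}\to\mathbb{R}$ be positive and rd-continuous, with $$\frac{B+\int_a^b\varphi(s)\Delta s}{b-a}>\varphi(t)\quad\text{for all } t\in[a,b]^\kappa_{\mathbb{T}}.$$ Then, among all $C^1_{\mathrm{rd}}$-functions $y:[a,b]_{\mathbb{T}}\to\mathbb{R}$ satisfying $y^\Delta>0$ on $[a,b]^\kappa_{\mathbb{T}}$, $y(a)=0$ and $y(b)=B$, the functional $$\mathcal{F}(y)=\int_a^b[\varphi(t)+y^\Delta(t)]\ln[\varphi(t)+y^\Delta(t)]\Delta t$$ has minimum value $\mathcal{F}_{\min}=(b-a)C\ln(C)$, attained at $$y(t)=C(t-a)-\int_a^t\varphi(s)\Delta s,\quad t\in[a,b]_{\mathbb{T}},$$ where $C=\frac{B+\int_a^b\varphi(s)\Delta s}{b-a}$.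
   Context: A time scale $\mathbb{T}$ is a nonempty closed subset of $\mathbb{R}$; $[a,b]_{\mathbb{T}}=[a,b]\cap\mathbb{T}$. $[a,b]^\kappa_{\mathbb{T}}$ equals $[a,b]_{\mathbb{T}}$ with $b$ removed if $b$ is left-scattered, and $[a,b]_{\mathbb{T}}$ otherwise. $y^\Delta$ denotes the delta derivative ($y'$ on $\mathbb{R}$, $y(t+1)-y(t)$ on $\mathbb{Z}$); $C^1_{\mathrm{rd}}$ denotes functions delta differentiable on $[a,b]^\kappa_{\mathbb{T}}$ with rd-continuous delta derivative (rd-continuous: continuous at right-dense points, finite left limits at left-dense points). $\int\cdot\,\Delta t$ is the delta integral. *)

(* Defs.v *)
From Stdlib Require Import Reals Lra ClassicalEpsilon.
Open Scope R_scope.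

Definition ts_closed (T : R -> Prop) : Prop :=
  forall x, (forall eps, 0 < eps -> exists y, T y /\ Rabs (y - x) < eps) -> T x.
Definition time_scale (T : R -> Prop) : Prop := (exists x, T x) /\ ts_closed T.

Definition tsI (T : R -> Prop) (a b : R) : R -> Prop := fun t => T t /\ a <= t <= b.

Definition is_inf (P : R -> Prop) (s : R) : Prop :=
  (forall u, P u -> s <= u) /\ (forall m, (forall u, P u -> m <= u) -> m <= s).
Definition is_sup (P : R -> Prop) (s : R) : Prop :=
  (forall u, P u -> u <= s) /\ (forall m, (forall u, P u -> u <= m) -> s <= m).

(** Forward jump sigma(t) = inf{s in X | s > t}, with inf of empty set = t
    (this only happens when t = max X, where sup X = t). *)
Definition sigma (X : R -> Prop) (t : R) : R :=
  epsilon (inhabits 0) (fun s =>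
    ((exists u, X u /\ t < u) /\ is_inf (fun u => X u /\ t < u) s) \/
    (~ (exists u, X u /\ t < u) /\ s = t)).

(** Backward jump rho(t) = sup{s in X | s < t}, with sup of empty set = t. *)
Definition rho (X : R -> Prop) (t : R) : R :=
  epsilon (inhabits 0) (fun s =>
    ((exists u, X u /\ u < t) /\ is_sup (fun u => X u /\ u < t) s) \/
    (~ (exists u, X u /\ u < t) /\ s = t)).

Definition kappa (X : R -> Prop) (t : R) : Prop :=
  X t /\ ~ ((forall u, X u -> u <= t) /\ rho X t < t).

Definition is_delta_deriv (X : R -> Prop) (f : R -> R) (t l : R) : Prop :=
  forall eps, 0 < eps -> exists delta, 0 < delta /\
    forall s, X s -> Rabs (t - s) < delta ->
      Rabs (f (sigma X t) - f s - l * (sigma X t - s)) <= eps * Rabs (sigma X t - s).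

(** rd-continuity of f : D -> R, density measured in the time scale X (D ⊆ X):
    continuous at right-dense points, finite left limits at left-dense points. *)
Definition rd_continuous (X D : R -> Prop) (f : R -> R) : Prop :=
  forall t, D t ->
    (sigma X t = t -> forall eps, 0 < eps -> exists delta, 0 < delta /\
       forall s, D s -> Rabs (s - t) < delta -> Rabs (f s - f t) < eps) /\
    (rho X t = t -> exists L, forall eps, 0 < eps -> exists delta, 0 < delta /\
       forall s, D s -> t - delta < s < t -> Rabs (f s - L) < eps).

Definition C1rd (X : R -> Prop) (y yd : R -> R) : Prop :=
  (forall t, kappa X t -> is_delta_deriv X y t (yd t)) /\ rd_continuous X (kappa X) yd.

(** Delta integral via antiderivatives (Bohner–Peterson Def. 1.71):
    int_r^s f Δt = F s - F r where F^Δ = f on X^kappa. *)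
Definition is_delta_antideriv (X : R -> Prop) (f F : R -> R) : Prop :=
  forall t, kappa X t -> is_delta_deriv X F t (f t).
Definition delta_int (X : R -> Prop) (f : R -> R) (r s : R) : R :=
  epsilon (inhabits 0) (fun v => exists F, is_delta_antideriv X f F /\ v = F s - F r).

Definition Ffun (X : R -> Prop) (phi yd : R -> R) (a b : R) : R :=
  delta_int X (fun t => (phi t + yd t) * ln (phi t + yd t)) a b.

(* Main.v *)
Require Import Defs.
From Stdlib Require Import Reals Lra ZArith ClassicalEpsilon Classical FunctionalExtensionality.
From Coquelicot Require Import Coquelicot.
Import Defs.
Open Scope R_scope.


Definition good (X : R -> Prop) (a b : R) : Prop :=
  ts_closed X /\ X a /\ X b /\ a < b /\ (forall u, X u -> a <= u <= b).

Lemma sup_exists (P : R -> Prop) :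
  (exists x, P x) -> (exists M, forall u, P u -> u <= M) -> exists s, is_sup P s.
Proof.
  intros Hne [M HM].
  destruct (completeness P) as [s [Hs1 Hs2]].
  - exists M; intros u Hu; apply HM; exact Hu.
  - exact Hne.
  - exists s; split.
    + intros u Hu; apply Hs1; exact Hu.
    + intros m Hm; apply Hs2; intros u Hu; apply Hm; exact Hu.
Qed.

Lemma inf_exists (P : R -> Prop) :
  (exists x, P x) -> (exists M, forall u, P u -> M <= u) -> exists s, is_inf P s.
Proof.
  intros [x Hx] [M HM].
  destruct (sup_exists (fun v => P (- v))) as [s [Hs1 Hs2]].
  - exists (-x); rewrite Ropp_involutive; exact Hx.
  - exists (-M); intros u Hu; specialize (HM _ Hu); lra.
  - exists (-s); split.
    + intros u Hu. assert (- u <= s) by (apply Hs1; rewrite Ropp_involutive; exact Hu). lra.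
    + intros m Hm. assert (s <= - m). { apply Hs2. intros u Hu. specialize (Hm _ Hu). lra. }
      lra.
Qed.

Lemma inf_closed (X P : R -> Prop) s :
  ts_closed X -> (forall u, P u -> X u) -> (exists u, P u) -> is_inf P s -> X s.
Proof.
  intros HC HPX Hne [H1 H2]. apply HC. intros eps Heps.
  destruct (classic (exists u, P u /\ u < s + eps)) as [[u [Hu Hu2]]|Hno].
  - exists u; split; [apply HPX; exact Hu|]. specialize (H1 _ Hu).
    rewrite Rabs_right; lra.
  - exfalso. assert (s + eps <= s); [|lra]. apply H2. intros u Hu.
    destruct (Rle_dec (s + eps) u); [lra|]. exfalso; apply Hno; exists u; split; [exact Hu|lra].
Qed.

Lemma sup_closed (X P : R -> Prop) s :
  ts_closed X -> (forall u, P u -> X u) -> (exists u, P u) -> is_sup P s -> X s.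
Proof.
  intros HC HPX Hne [H1 H2]. apply HC. intros eps Heps.
  destruct (classic (exists u, P u /\ s - eps < u)) as [[u [Hu Hu2]]|Hno].
  - exists u; split; [apply HPX; exact Hu|]. specialize (H1 _ Hu).
    rewrite Rabs_left1; lra.
  - exfalso. assert (s <= s - eps); [|lra]. apply H2. intros u Hu.
    destruct (Rle_dec u (s - eps)); [lra|]. exfalso; apply Hno; exists u; split; [exact Hu|lra].
Qed.

Section S.
End S.

Lemma sigma_cases X t :
  ((exists u, X u /\ t < u) /\ is_inf (fun u => X u /\ t < u) (sigma X t)) \/
  (~ (exists u, X u /\ t < u) /\ sigma X t = t).
Proof.
  unfold sigma. apply epsilon_spec.
  destruct (classic (exists u, X u /\ t < u)) as [H|H].
  - destruct (inf_exists (fun u => X u /\ t < u)) as [s Hs]; [exact H| |].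
    + exists t; intros u [_ Hu]; lra.
    + exists s; left; split; assumption.
  - exists t; right; split; [exact H|reflexivity].
Qed.

Lemma rho_cases X t :
  ((exists u, X u /\ u < t) /\ is_sup (fun u => X u /\ u < t) (rho X t)) \/
  (~ (exists u, X u /\ u < t) /\ rho X t = t).
Proof.
  unfold rho. apply epsilon_spec.
  destruct (classic (exists u, X u /\ u < t)) as [H|H].
  - destruct (sup_exists (fun u => X u /\ u < t)) as [s Hs]; [exact H| |].
    + exists t; intros u [_ Hu]; lra.
    + exists s; left; split; assumption.
  - exists t; right; split; [exact H|reflexivity].
Qed.

Lemma sg_ge X t : t <= sigma X t.
Proof.
  destruct (sigma_cases X t) as [[_ [_ H2]]|[_ H]]; [|lra].
  apply H2. intros u [_ Hu]; lra.
Qed.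

Lemma sg_X X a b t : good X a b -> X t -> X (sigma X t).
Proof.
  intros HG Ht. destruct (sigma_cases X t) as [[Hne Hi]|[_ H]]; [|rewrite H; exact Ht].
  apply (inf_closed X (fun u => X u /\ t < u)); try tauto. apply HG.
Qed.

Lemma sg_le X t u : X u -> t < u -> sigma X t <= u.
Proof.
  intros Hu Htu. destruct (sigma_cases X t) as [[_ [H1 _]]|[H _]].
  - apply H1; split; assumption.
  - exfalso; apply H; exists u; split; assumption.
Qed.

Lemma sg_dense X a b t : good X a b -> sigma X t = t -> t < b ->
  forall d, 0 < d -> exists u, X u /\ t < u < t + d.
Proof.
  intros HG Hs Htb d Hd. destruct (classic (exists u, X u /\ t < u < t + d)) as [H|H]; [exact H|].
  exfalso. destruct (sigma_cases X t) as [[_ [_ H2]]|[H3 _]].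
  - assert (t + d <= sigma X t); [|lra]. apply H2. intros u [Hu Htu].
    destruct (Rle_dec (t + d) u); [lra|]. exfalso; apply H; exists u; repeat split; auto; lra.
  - apply H3; exists b; split; [apply HG|exact Htb].
Qed.

Lemma sg_b X a b : good X a b -> sigma X b = b.
Proof.
  intros HG. destruct (sigma_cases X b) as [[[u [Hu Hbu]] _]|[_ H]]; [|exact H].
  destruct HG as (_&_&_&_&H). specialize (H _ Hu). lra.
Qed.

Lemma sg_le_b X a b t : good X a b -> X t -> sigma X t <= b.
Proof. intros HG Ht. pose proof (sg_X X a b t HG Ht) as Hs. destruct HG as (_&_&_&_&H). apply H; auto. Qed.

Lemma rh_le X t : rho X t <= t.
Proof.
  destruct (rho_cases X t) as [[_ [_ H2]]|[_ H]]; [|lra].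
  apply H2. intros u [_ Hu]; lra.
Qed.

Lemma rh_X X a b t : good X a b -> X t -> X (rho X t).
Proof.
  intros HG Ht. destruct (rho_cases X t) as [[Hne Hi]|[_ H]]; [|rewrite H; exact Ht].
  apply (sup_closed X (fun u => X u /\ u < t)); try tauto. apply HG.
Qed.

Lemma rh_ge X t u : X u -> u < t -> u <= rho X t.
Proof.
  intros Hu Htu. destruct (rho_cases X t) as [[_ [H1 _]]|[H _]].
  - apply H1; split; assumption.
  - exfalso; apply H; exists u; split; assumption.
Qed.

Lemma rh_dense X a b t : good X a b -> rho X t = t -> a < t ->
  forall d, 0 < d -> exists u, X u /\ t - d < u < t.
Proof.
  intros HG Hs Htb d Hd. destruct (classic (exists u, X u /\ t - d < u < t)) as [H|H]; [exact H|].
  exfalso. destruct (rho_cases X t) as [[_ [_ H2]]|[H3 _]].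
  - assert (rho X t <= t - d); [|lra]. apply H2. intros u [Hu Htu].
    destruct (Rle_dec u (t - d)); [lra|]. exfalso; apply H; exists u; repeat split; auto; lra.
  - apply H3; exists a; split; [apply HG|exact Htb].
Qed.

Lemma sg_of_rh X a b m : good X a b -> X m -> rho X m < m -> sigma X (rho X m) = m.
Proof.
  intros HG Hm Hr. set (p := rho X m) in *.
  assert (Hp : X p) by (apply (rh_X X a b); auto).
  assert (H1 : sigma X p <= m) by (apply sg_le; auto).
  destruct (Rle_lt_or_eq_dec _ _ H1) as [Hlt|]; [|auto]. exfalso.
  assert (Hs : X (sigma X p)) by (apply (sg_X X a b); auto).
  assert (sigma X p <= p) by (apply rh_ge; auto).
  pose proof (sg_ge X p).
  assert (Heq : sigma X p = p) by lra.
  destruct (sg_dense X a b p HG Heq) with (d := m - p) as [u [Hu Hu2]].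
  - apply Rlt_le_trans with m; [exact Hr| apply HG; exact Hm].
  - lra.
  - assert (u <= p) by (apply rh_ge; auto; lra). lra.
Qed.

Lemma kappa_X X t : kappa X t -> X t.
Proof. intros [H _]; exact H. Qed.

Lemma kappa_lt X a b t : good X a b -> X t -> t < b -> kappa X t.
Proof.
  intros HG Ht Htb. split; [exact Ht|]. intros [H _]. specialize (H b). assert (b <= t) by (apply H; apply HG). lra.
Qed.

Lemma kappa_rd X t : X t -> rho X t = t -> kappa X t.
Proof. intros Ht Hr. split; [exact Ht|]. intros [_ H]. lra. Qed.

Lemma deriv_ext X f g t l : (forall u, X u -> f u = g u) -> X (sigma X t) ->
  is_delta_deriv X f t l -> is_delta_deriv X g t l.
Proof.
  intros Hfg Hs H eps Heps. destruct (H eps Heps) as [d [Hd H2]]. exists d; split; [exact Hd|].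
  intros s Xs Hts. rewrite <- (Hfg _ Hs), <- (Hfg _ Xs). apply H2; assumption.
Qed.

Lemma deriv_lin X f g t l m al be :
  is_delta_deriv X f t l -> is_delta_deriv X g t m ->
  is_delta_deriv X (fun x => al * f x + be * g x) t (al * l + be * m).
Proof.
  intros Hf Hg eps Heps.
  set (K := Rabs al + Rabs be + 1).
  assert (HK : 0 < K) by (unfold K; pose proof (Rabs_pos al); pose proof (Rabs_pos be); lra).
  set (e := eps / K). assert (He : 0 < e) by (unfold e; apply Rdiv_lt_0_compat; lra).
  destruct (Hf e He) as [d1 [Hd1 H1]]. destruct (Hg e He) as [d2 [Hd2 H2]].
  exists (Rmin d1 d2); split; [apply Rmin_pos; assumption|].
  intros s Xs Hts.
  specialize (H1 s Xs (Rlt_le_trans _ _ _ Hts (Rmin_l _ _))).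
  specialize (H2 s Xs (Rlt_le_trans _ _ _ Hts (Rmin_r _ _))).
  set (A := f (sigma X t) - f s - l * (sigma X t - s)) in *.
  set (B := g (sigma X t) - g s - m * (sigma X t - s)) in *.
  replace (al * f (sigma X t) + be * g (sigma X t) - (al * f s + be * g s) -
     (al * l + be * m) * (sigma X t - s)) with (al * A + be * B) by (unfold A, B; ring).
  set (D := Rabs (sigma X t - s)) in *.
  assert (HD : 0 <= D) by apply Rabs_pos.
  eapply Rle_trans; [apply Rabs_triang|]. rewrite !Rabs_mult.
  assert (Ha : Rabs al * Rabs A <= Rabs al * (e * D)) by (apply Rmult_le_compat_l; [apply Rabs_pos|exact H1]).
  assert (Hb : Rabs be * Rabs B <= Rabs be * (e * D)) by (apply Rmult_le_compat_l; [apply Rabs_pos|exact H2]).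
  assert (HeK : e * K = eps) by (unfold e; field; lra).
  assert (Hfin : (Rabs al + Rabs be) * (e * D) <= eps * D).
  { rewrite <- HeK. unfold K. pose proof (Rabs_pos al). pose proof (Rabs_pos be).
    assert (0 <= e * D) by (apply Rmult_le_pos; lra). nra. }
  lra.
Qed.

Lemma deriv_rs X f t l : X t -> t < sigma X t -> is_delta_deriv X f t l ->
  f (sigma X t) - f t = l * (sigma X t - t).
Proof.
  intros Xt Hlt H. set (A := f (sigma X t) - f t - l * (sigma X t - t)).
  destruct (Req_dec A 0) as [HA|HA]; [unfold A in HA; lra|]. exfalso.
  set (mu := sigma X t - t). assert (Hmu : 0 < mu) by (unfold mu; lra).
  assert (HAp : 0 < Rabs A) by (apply Rabs_pos_lt; exact HA).
  destruct (H (Rabs A / (2 * mu))) as [d [Hd H2]]; [apply Rdiv_lt_0_compat; lra|].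
  specialize (H2 t Xt). rewrite Rminus_diag, Rabs_R0 in H2. specialize (H2 Hd).
  fold A in H2. rewrite (Rabs_right (sigma X t - t)) in H2 by lra. fold mu in H2.
  replace (Rabs A / (2 * mu) * mu) with (Rabs A / 2) in H2 by (field; lra). lra.
Qed.

Lemma deriv_cont X f t l : X t -> is_delta_deriv X f t l ->
  forall eps, 0 < eps -> exists d, 0 < d /\ forall s, X s -> Rabs (t - s) < d -> Rabs (f s - f t) < eps.
Proof.
  intros Xt H eps Heps.
  set (mu := sigma X t - t). assert (Hmu : 0 <= mu) by (unfold mu; pose proof (sg_ge X t); lra).
  set (e := eps / (4 * (mu + 1))). assert (He : 0 < e) by (unfold e; apply Rdiv_lt_0_compat; lra).
  destruct (H e He) as [d1 [Hd1 H1]].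
  set (d2 := eps / (4 * (Rabs l + 1))).
  assert (Hd2 : 0 < d2) by (unfold d2; apply Rdiv_lt_0_compat; pose proof (Rabs_pos l); lra).
  exists (Rmin d1 (Rmin 1 d2)). split; [repeat apply Rmin_pos; lra|].
  intros s Xs Hts.
  assert (Hts1 : Rabs (t - s) < d1) by (eapply Rlt_le_trans; [exact Hts|apply Rmin_l]).
  assert (Hts2 : Rabs (t - s) < 1) by (eapply Rlt_le_trans; [exact Hts|eapply Rle_trans; [apply Rmin_r|apply Rmin_l]]).
  assert (Hts3 : Rabs (t - s) < d2) by (eapply Rlt_le_trans; [exact Hts|eapply Rle_trans; [apply Rmin_r|apply Rmin_r]]).
  pose proof (H1 t Xt) as HA. rewrite Rminus_diag, Rabs_R0 in HA. specialize (HA Hd1).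
  pose proof (H1 s Xs Hts1) as HB.
  rewrite (Rabs_right (sigma X t - t)) in HA by (pose proof (sg_ge X t); lra). fold mu in HA.
  set (A := f (sigma X t) - f t - l * (sigma X t - t)) in *.
  set (B := f (sigma X t) - f s - l * (sigma X t - s)) in *.
  replace (f s - f t) with (A - B - l * (t - s)) by (unfold A, B; ring).
  assert (HB2 : Rabs (sigma X t - s) <= mu + Rabs (t - s)).
  { replace (sigma X t - s) with (mu + (t - s)) by (unfold mu; ring).
    eapply Rle_trans; [apply Rabs_triang|]. rewrite Rabs_right by lra. lra. }
  assert (Hc1 : e * mu < eps / 4 /\ e <= eps / 4).
  { unfold e. split.
    - apply Rmult_lt_reg_r with (4 * (mu + 1)); [lra|].
      replace (eps / (4 * (mu + 1)) * mu * (4 * (mu + 1))) with (eps * mu) by (field; lra). nra.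
    - apply Rmult_le_reg_r with (4 * (mu + 1)); [lra|].
      replace (eps / (4 * (mu + 1)) * (4 * (mu + 1))) with eps by (field; lra). nra. }
  assert (Hc2 : Rabs l * Rabs (t - s) <= eps / 4).
  { apply Rle_trans with (Rabs l * d2). apply Rmult_le_compat_l; [apply Rabs_pos|lra].
    unfold d2. pose proof (Rabs_pos l).
    apply Rmult_le_reg_r with (4 * (Rabs l + 1)); [lra|].
    replace (Rabs l * (eps / (4 * (Rabs l + 1))) * (4 * (Rabs l + 1))) with (Rabs l * eps) by (field; lra). nra. }
  assert (HeB : e * Rabs (sigma X t - s) <= e * mu + e * Rabs (t - s)).
  { rewrite <- Rmult_plus_distr_l. apply Rmult_le_compat_l; lra. }
  assert (e * Rabs (t - s) <= e) by (pose proof (Rabs_pos (t - s)); nra).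
  eapply Rle_lt_trans. { unfold Rminus. eapply Rle_trans; [apply Rabs_triang|].
    apply Rplus_le_compat; [apply Rabs_triang|]. rewrite Rabs_Ropp. apply Rle_refl. }
  rewrite ?Rabs_Ropp, ?Rabs_mult. replace (t + - s) with (t - s) by ring. assert (Rabs A <= e * mu) by exact HA. destruct Hc1. lra.
Qed.

Lemma mono_eps X a b F r s : good X a b ->
  (forall t, kappa X t -> exists l, 0 <= l /\ is_delta_deriv X F t l) ->
  X r -> X s -> r <= s -> forall eps, 0 < eps -> F r - eps * (s - r) <= F s.
Proof.
  intros HG HD Xr Xs Hrs eps Heps.
  destruct (Rle_dec (F r - eps * (s - r)) (F s)) as [|Hc]; [assumption|exfalso].
  apply Rnot_le_lt in Hc.
  set (Bad := fun u => X u /\ r <= u /\ u <= s /\ F u < F r - eps * (u - r)).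
  assert (Bs : Bad s) by (unfold Bad; repeat split; auto; lra).
  destruct (inf_exists Bad) as [m [Hm1 Hm2]]; [exists s; exact Bs|exists r; intros u (_&Hu&_); exact Hu|].
  assert (Hms : m <= s) by (apply Hm1; exact Bs).
  assert (Hrm : r <= m) by (apply Hm2; intros u (_&Hu&_); exact Hu).
  assert (Xm : X m).
  { apply (inf_closed X Bad); [apply HG| intros u (Hu&_); exact Hu| exists s; exact Bs| split; assumption]. }
  assert (Hab := proj2 (proj2 (proj2 (proj2 HG)))).
  assert (GB : forall u, X u -> r <= u -> u < m -> F r - eps * (u - r) <= F u).
  { intros u Xu Hru Hum. destruct (Rle_dec (F r - eps * (u - r)) (F u)) as [|Hc2]; [assumption|].
    exfalso. apply Rnot_le_lt in Hc2. assert (m <= u) by (apply Hm1; unfold Bad; repeat split; auto; lra). lra. }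
  destruct (Rle_dec (F r - eps * (m - r)) (F m)) as [Hg|Hbm].
  -
    assert (Hms2 : m < s) by (destruct (Req_dec m s); [subst; lra|lra]).
    assert (Hmb : m < b) by (pose proof (Hab s Xs); lra).
    destruct (HD m (kappa_lt X a b m HG Xm Hmb)) as [l [Hl Hd]].
    assert (Hsm : sigma X m = m).
    { pose proof (sg_ge X m). destruct (Rle_lt_or_eq_dec _ _ H) as [Hlt|]; [|auto]. exfalso.
      assert (sigma X m <= m); [|lra]. apply Hm2. intros u Bu.
      assert (m <= u) by (apply Hm1; exact Bu).
      destruct (Req_dec u m) as [->|Hne]; [destruct Bu as (_&_&_&Hb); lra|].
      apply sg_le; [apply Bu|lra]. }
    destruct (Hd eps Heps) as [d [Hdp Hd2]].
    assert (exists u, Bad u /\ u < m + d) as [u [Bu Hu]].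
    { destruct (classic (exists u, Bad u /\ u < m + d)) as [|Hno]; [assumption|exfalso].
      assert (m + d <= m); [|lra]. apply Hm2. intros u Bu.
      destruct (Rle_dec (m + d) u); [lra|]. exfalso; apply Hno; exists u; split; [exact Bu|lra]. }
    assert (m <= u) by (apply Hm1; exact Bu).
    destruct (Req_dec u m) as [->|Hne]; [destruct Bu as (_&_&_&Hb); lra|].
    destruct Bu as (Xu&_&_&Hbu).
    specialize (Hd2 u Xu). rewrite Hsm in Hd2.
    rewrite Rabs_left1 in Hd2 by lra.
    assert (Hx : F m - F u - l * (m - u) <= eps * - (m - u)).
    { eapply Rle_trans; [apply Rle_abs|apply Hd2]. lra. }
    assert (0 <= l * (u - m)) by (apply Rmult_le_pos; lra).
    nra.
  - apply Rnot_le_lt in Hbm.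
    assert (Hrm2 : r < m) by (destruct (Req_dec r m); [subst; lra|lra]).
    pose proof (rh_le X m) as Hrh.
    destruct (Rle_lt_or_eq_dec _ _ Hrh) as [Hlt|Heq].
    + set (p := rho X m) in *.
      assert (Xp : X p) by (apply (rh_X X a b); auto).
      assert (Hrp : r <= p) by (apply rh_ge; auto).
      assert (Hsp : sigma X p = m) by (apply (sg_of_rh X a b); auto).
      assert (Hpb : p < b) by (pose proof (Hab m Xm); lra).
      destruct (HD p (kappa_lt X a b p HG Xp Hpb)) as [l [Hl Hd]].
      pose proof (deriv_rs X F p l Xp) as Hrs'. rewrite Hsp in Hrs'. specialize (Hrs' Hlt Hd).
      pose proof (GB p Xp Hrp Hlt).
      assert (0 <= l * (m - p)) by (apply Rmult_le_pos; lra).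
      assert (eps * (p - r) <= eps * (m - r)) by (apply Rmult_le_compat_l; lra).
      lra.
    + destruct (HD m (kappa_rd X m Xm Heq)) as [l [Hl Hd]].
      set (eta := F r - eps * (m - r) - F m).
      destruct (deriv_cont X F m l Xm Hd eta) as [d [Hdp Hd2]]; [unfold eta; lra|].
      assert (Ham : a < m) by (pose proof (Hab r Xr); lra).
      destruct (rh_dense X a b m HG Heq Ham (Rmin d (m - r))) as [u [Xu Hu]]; [apply Rmin_pos; lra|].
      assert (Hu1 : m - d <= m - Rmin d (m - r)) by (pose proof (Rmin_l d (m - r)); lra).
      assert (Hu2 : m - (m - r) <= m - Rmin d (m - r)) by (pose proof (Rmin_r d (m - r)); lra).
      assert (Hgu : F r - eps * (u - r) <= F u) by (apply GB; auto; lra).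
      assert (eps * (u - r) <= eps * (m - r)) by (apply Rmult_le_compat_l; lra).
      assert (Habs : Rabs (F u - F m) < eta) by (apply Hd2; auto; rewrite Rabs_right; lra).
      pose proof (Rle_abs (F u - F m)) as Hq. unfold eta in *. lra.
Qed.

Lemma mono X a b F r s : good X a b ->
  (forall t, kappa X t -> exists l, 0 <= l /\ is_delta_deriv X F t l) ->
  X r -> X s -> r <= s -> F r <= F s.
Proof.
  intros HG HD Xr Xs Hrs.
  destruct (Rle_dec (F r) (F s)) as [|Hc]; [assumption|exfalso]. apply Rnot_le_lt in Hc.
  set (eps := (F r - F s) / (2 * (s - r + 1))).
  assert (He : 0 < eps) by (unfold eps; apply Rdiv_lt_0_compat; lra).
  pose proof (mono_eps X a b F r s HG HD Xr Xs Hrs eps He).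
  assert (eps * (s - r + 1) = (F r - F s) / 2) by (unfold eps; field; lra).
  assert (0 <= eps * 1) by lra. nra.
Qed.

Lemma delta_int_spec X a b f F r s : good X a b -> is_delta_antideriv X f F ->
  X r -> X s -> delta_int X f r s = F s - F r.
Proof.
  intros HG HF Xr Xs. unfold delta_int.
  match goal with |- epsilon ?i ?P = _ => assert (HP : P (epsilon i P)) by (apply epsilon_spec; exists (F s - F r); exists F; split; auto) end.
  destruct HP as [G [HGa ->]].
  assert (HD1 : forall t, kappa X t -> exists l, 0 <= l /\ is_delta_deriv X (fun x => 1 * F x + -1 * G x) t l).
  { intros t Kt. exists 0; split; [lra|]. replace 0 with (1 * f t + -1 * f t) by ring.
    apply deriv_lin; auto. }
  assert (HD2 : forall t, kappa X t -> exists l, 0 <= l /\ is_delta_deriv X (fun x => -1 * F x + 1 * G x) t l).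
  { intros t Kt. exists 0; split; [lra|]. replace 0 with (-1 * f t + 1 * f t) by ring.
    apply deriv_lin; auto. }
  destruct (Rle_dec r s).
  - pose proof (mono X a b _ r s HG HD1 Xr Xs r0). pose proof (mono X a b _ r s HG HD2 Xr Xs r0).
    simpl in *. lra.
  - pose proof (mono X a b _ s r HG HD1 Xs Xr ltac:(lra)). pose proof (mono X a b _ s r HG HD2 Xs Xr ltac:(lra)).
    simpl in *. lra.
Qed.

Definition tau (X : R -> Prop) (a s : R) : R :=
  epsilon (inhabits 0) (fun m => is_sup (fun u => X u /\ u <= Rmax a s) m).

Lemma tau_spec X a b s : good X a b ->
  X (tau X a s) /\ tau X a s <= Rmax a s /\ (forall u, X u -> u <= Rmax a s -> u <= tau X a s).
Proof.
  intros HG.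
  assert (Hs : is_sup (fun u => X u /\ u <= Rmax a s) (tau X a s)).
  { unfold tau. apply epsilon_spec. apply sup_exists.
    - exists a; split; [apply HG|apply Rmax_l].
    - exists (Rmax a s); intros u [_ Hu]; exact Hu. }
  destruct Hs as [H1 H2]. split; [|split].
  - apply (sup_closed X (fun u => X u /\ u <= Rmax a s)); [apply HG|tauto| |split; assumption].
    exists a; split; [apply HG|apply Rmax_l].
  - apply H2. intros u [_ Hu]; exact Hu.
  - intros u Xu Hu. apply H1; split; assumption.
Qed.

Lemma Rmax_ge_eq a s : a <= s -> Rmax a s = s.
Proof. intros; unfold Rmax; destruct (Rle_dec a s); lra. Qed.

Lemma tau_between X a b p u : good X a b -> X p -> p <= u -> p <= tau X a u <= u.
Proof.
  intros HG Xp Hpu. assert (a <= p) by (apply HG; exact Xp).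
  destruct (tau_spec X a b u HG) as (H1&H2&H3). rewrite Rmax_ge_eq in * by lra.
  split; [apply H3; auto|exact H2].
Qed.

Lemma tau_X X a b t : good X a b -> X t -> tau X a t = t.
Proof. intros HG Xt. pose proof (tau_between X a b t t HG Xt (Rle_refl _)). lra. Qed.

Lemma tau_mono X a b u v : good X a b -> u <= v -> tau X a u <= tau X a v.
Proof.
  intros HG Huv. destruct (tau_spec X a b u HG) as (H1&H2&_). destruct (tau_spec X a b v HG) as (_&_&H3).
  apply H3; auto. eapply Rle_trans; [exact H2|]. unfold Rmax; destruct (Rle_dec a u), (Rle_dec a v); lra.
Qed.

Lemma tau_const X a b u v : good X a b -> u <= v ->
  (forall w, X w -> ~ (u < w <= v)) -> tau X a v = tau X a u.
Proof.
  intros HG Huv Hno. pose proof (tau_mono X a b u v HG Huv).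
  destruct (Rle_dec (tau X a v) (tau X a u)) as [|Hc]; [lra|exfalso]. apply Rnot_le_lt in Hc.
  destruct (tau_spec X a b u HG) as (_&_&H3u). destruct (tau_spec X a b v HG) as (Xv&H2v&_).
  assert (Hgt : Rmax a u < tau X a v).
  { destruct (Rle_dec (tau X a v) (Rmax a u)) as [Hl|Hl]; [|lra].
    specialize (H3u _ Xv Hl). lra. }
  assert (a <= Rmax a u) by apply Rmax_l. assert (u <= Rmax a u) by apply Rmax_r.
  assert (Hav : a <= v) by (unfold Rmax in H2v; destruct (Rle_dec a v); lra).
  rewrite Rmax_ge_eq in H2v by lra.
  apply (Hno _ Xv). lra.
Qed.

Lemma tau_rs X a b t s : good X a b -> X t -> t <= s -> s < sigma X t -> tau X a s = t.
Proof.
  intros HG Xt Hts Hs. rewrite (tau_const X a b t s HG Hts).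
  - apply (tau_X X a b); auto.
  - intros w Xw Hw. assert (sigma X t <= w) by (apply sg_le; auto; lra). lra.
Qed.

Section Loc.
End Loc.

Lemma loc_left X a b f : good X a b -> rd_continuous X (kappa X) f ->
  forall m eps, 0 < eps -> exists d, 0 < d /\ exists c, forall u, m - d < u < m ->
    Rabs (f (tau X a u) - c) <= eps.
Proof.
  intros HG Hf m eps Heps.
  assert (Hab := proj2 (proj2 (proj2 (proj2 HG)))).
  destruct (classic (exists d, 0 < d /\ forall u, X u -> ~ (m - d < u < m))) as [[d [Hd Hno]]|Hacc].
  - exists d; split; [exact Hd|]. exists (f (tau X a (m - d))).
    intros u Hu. rewrite (tau_const X a b (m - d) u HG) by (try lra; intros w Xw Hw; apply (Hno w Xw); lra).
    rewrite Rminus_diag, Rabs_R0; lra.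
  - assert (Hacc2 : forall d, 0 < d -> exists u, X u /\ m - d < u < m).
    { intros d Hd. apply NNPP. intros Hn. apply Hacc. exists d; split; [exact Hd|].
      intros u Xu Hu. apply Hn. exists u; split; assumption. }
    assert (Xm : X m).
    { apply HG. intros e He. destruct (Hacc2 e He) as [u [Xu Hu]]. exists u; split; [exact Xu|].
      rewrite Rabs_left1; lra. }
    destruct (Hacc2 1 Rlt_0_1) as [u1 [Xu1 Hu1]].
    assert (Ham : a < m) by (pose proof (Hab u1 Xu1); lra).
    assert (Hrho : rho X m = m).
    { pose proof (rh_le X m). destruct (Rle_lt_or_eq_dec _ _ H) as [Hlt|]; [|auto]. exfalso.
      destruct (Hacc2 (m - rho X m)) as [u [Xu Hu]]; [lra|].
      assert (u <= rho X m) by (apply rh_ge; auto; lra). lra. }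
    destruct (proj2 (Hf m (kappa_rd X m Xm Hrho)) Hrho) as [L HL].
    destruct (HL eps Heps) as [d1 [Hd1 HL2]].
    destruct (Hacc2 d1 Hd1) as [u0 [Xu0 Hu0]].
    exists (m - u0); split; [lra|]. exists L. intros u Hu.
    pose proof (tau_between X a b u0 u HG Xu0 ltac:(lra)) as Htb.
    destruct (tau_spec X a b u HG) as (Xtu&_&_).
    assert (Hmb : m <= b) by (apply Hab; exact Xm).
    left. apply HL2; [apply (kappa_lt X a b); auto; lra|lra].
Qed.

Lemma loc_right X a b f : good X a b -> rd_continuous X (kappa X) f ->
  forall m eps, 0 < eps -> exists d, 0 < d /\ forall u, m <= u < m + d ->
    Rabs (f (tau X a u) - f (tau X a m)) <= eps.
Proof.
  intros HG Hf m eps Heps.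
  assert (Hab := proj2 (proj2 (proj2 (proj2 HG)))).
  destruct (classic (exists d, 0 < d /\ forall u, X u -> ~ (m < u < m + d))) as [[d [Hd Hno]]|Hacc].
  - exists d; split; [exact Hd|].
    intros u Hu. rewrite (tau_const X a b m u HG) by (try lra; intros w Xw Hw; apply (Hno w Xw); lra).
    rewrite Rminus_diag, Rabs_R0; lra.
  - assert (Hacc2 : forall d, 0 < d -> exists u, X u /\ m < u < m + d).
    { intros d Hd. apply NNPP. intros Hn. apply Hacc. exists d; split; [exact Hd|].
      intros u Xu Hu. apply Hn. exists u; split; assumption. }
    assert (Xm : X m).
    { apply HG. intros e He. destruct (Hacc2 e He) as [u [Xu Hu]]. exists u; split; [exact Xu|].
      rewrite Rabs_right; lra. }
    destruct (Hacc2 1 Rlt_0_1) as [u1 [Xu1 Hu1]].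
    assert (Hmb : m < b) by (pose proof (Hab u1 Xu1); lra).
    assert (Hsg : sigma X m = m).
    { pose proof (sg_ge X m). destruct (Rle_lt_or_eq_dec _ _ H) as [Hlt|]; [|auto]. exfalso.
      destruct (Hacc2 (sigma X m - m)) as [u [Xu Hu]]; [lra|].
      assert (sigma X m <= u) by (apply sg_le; auto; lra). lra. }
    destruct (proj1 (Hf m (kappa_lt X a b m HG Xm Hmb)) Hsg eps Heps) as [d1 [Hd1 H2]].
    exists (Rmin d1 (b - m)); split; [apply Rmin_pos; lra|].
    intros u Hu. pose proof (Rmin_l d1 (b - m)). pose proof (Rmin_r d1 (b - m)).
    pose proof (tau_between X a b m u HG Xm ltac:(lra)) as Htb.
    destruct (tau_spec X a b u HG) as (Xtu&_&_).
    rewrite (tau_X X a b m HG Xm).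
    left. apply H2; [apply (kappa_lt X a b); auto; lra|rewrite Rabs_right; lra].
Qed.

Lemma tau_le_a X a s : s <= a -> tau X a s = tau X a a.
Proof. intros H. unfold tau. rewrite (Rmax_left a s H), (Rmax_left a a (Rle_refl a)). reflexivity. Qed.

Lemma approx X a b f : good X a b -> rd_continuous X (kappa X) f ->
  forall eps, 0 < eps -> exists h, ex_RInt h a b /\ forall s, Rabs (h s - f (tau X a s)) <= eps.
Proof.
  intros HG Hf eps Heps.
  assert (Hab0 : a < b) by apply HG.
  set (ft := fun s => f (tau X a s)).
  set (S := fun x => a <= x <= b /\ exists h, ex_RInt h a x /\ forall s, s <= x -> Rabs (h s - ft s) <= eps).
  assert (Sa : S a).
  { split; [lra|]. exists (fun _ => ft a). split; [apply ex_RInt_point|].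
    intros s Hs. unfold ft. rewrite (tau_le_a X a s Hs), Rminus_diag, Rabs_R0. lra. }
  destruct (sup_exists S) as [m [Hm1 Hm2]]; [exists a; exact Sa|exists b; intros u [Hu _]; lra|].
  assert (Ham : a <= m) by (apply Hm1; exact Sa).
  assert (Hmb : m <= b) by (apply Hm2; intros u [Hu _]; lra).
  destruct (loc_left X a b f HG Hf m eps Heps) as [dL [HdL [c Hc]]].
  destruct (loc_right X a b f HG Hf m eps Heps) as [dR [HdR HR]].
  assert (exists x, S x /\ m - dL < x) as [x [Sx Hx]].
  { apply NNPP; intros Hn. assert (m <= m - dL); [|lra]. apply Hm2. intros u Su.
    destruct (Rle_dec u (m - dL)); [assumption|]. exfalso; apply Hn; exists u; split; [exact Su|lra]. }
  assert (Hxm : x <= m) by (apply Hm1; exact Sx).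
  destruct Sx as [Hx2 [h [Hh1 Hh2]]].
  set (m' := Rmin b (m + dR / 2)).
  assert (Hm'1 : m <= m') by (unfold m'; apply Rmin_glb; lra).
  assert (Hm'2 : m' <= b) by (unfold m'; apply Rmin_l).
  assert (Hm'3 : m' < m + dR) by (unfold m'; pose proof (Rmin_r b (m + dR / 2)); lra).
  set (h' := fun s => if Rle_dec s x then h s else if Rlt_dec s m then c else ft m).
  assert (Sm' : S m').
  { split; [lra|]. exists h'. split.
    - apply ex_RInt_Chasles with x.
      + apply ex_RInt_ext with h; [|exact Hh1].
        intros s Hs. rewrite Rmin_left in Hs by lra. rewrite Rmax_right in Hs by lra.
        unfold h'. destruct (Rle_dec s x); [reflexivity|lra].
      + apply ex_RInt_Chasles with m.
        * apply ex_RInt_ext with (fun _ => c); [|apply ex_RInt_const].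
          intros s Hs. rewrite Rmin_left in Hs by lra. rewrite Rmax_right in Hs by lra.
          unfold h'. destruct (Rle_dec s x); [lra|]. destruct (Rlt_dec s m); [reflexivity|lra].
        * apply ex_RInt_ext with (fun _ => ft m); [|apply ex_RInt_const].
          intros s Hs. rewrite Rmin_left in Hs by lra. rewrite Rmax_right in Hs by lra.
          unfold h'. destruct (Rle_dec s x); [lra|]. destruct (Rlt_dec s m); [lra|reflexivity].
    - intros s Hs. unfold h'. destruct (Rle_dec s x) as [Hsx|Hsx]; [apply Hh2; exact Hsx|].
      destruct (Rlt_dec s m) as [Hsm|Hsm].
      + rewrite Rabs_minus_sym. apply Hc. lra.
      + rewrite Rabs_minus_sym. apply HR. lra. }
  assert (Hmb2 : m = b).
  { destruct (Req_dec m b) as [|Hne]; [assumption|]. exfalso.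
    assert (m' <= m) by (apply Hm1; exact Sm').
    assert (m < m'); [|lra]. unfold m'. apply Rmin_glb_lt; lra. }
  assert (Hm'b : m' = b) by lra.
  rewrite Hm'b in Sm'. destruct Sm' as [_ [h2 [Hi2 Hc2]]].
  exists (fun s => if Rle_dec s b then h2 s else ft s). split.
  - apply ex_RInt_ext with h2; [|exact Hi2].
    intros s Hs. rewrite Rmin_left in Hs by lra. rewrite Rmax_right in Hs by lra.
    destruct (Rle_dec s b); [reflexivity|lra].
  - intros s. destruct (Rle_dec s b) as [Hsb|Hsb]; [apply Hc2; exact Hsb|].
    fold (ft s). rewrite Rminus_diag, Rabs_R0; lra.
Qed.

Lemma ex_RInt_ft X a b f : good X a b -> rd_continuous X (kappa X) f ->
  ex_RInt (fun s => f (tau X a s)) a b.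
Proof.
  intros HG Hf.
  set (ft := fun s => f (tau X a s)).
  set (P := fun (n : nat) (h : R -> R) => ex_RInt h a b /\ forall s, Rabs (h s - ft s) <= / (INR n + 1)).
  set (hs := fun n => epsilon (inhabits (fun _ : R => 0)) (P n)).
  assert (Hhs : forall n, P n (hs n)).
  { intros n. unfold hs. apply epsilon_spec. apply (approx X a b f HG Hf).
    apply Rinv_0_lt_compat. pose proof (pos_INR n); lra. }
  destruct (filterlim_RInt hs a b eventually eventually_filter ft (fun n => RInt (hs n) a b)) as [If [_ HI]].
  - intros n. apply RInt_correct. apply Hhs.
  - intros Q [eps HQ].
    destruct (archimed (/ eps)) as [Ha _].
    assert (Heps := cond_pos eps).
    exists (Z.to_nat (up (/ eps))). intros n Hn. apply HQ.
    intros t. destruct (Hhs n) as [_ H2]. specialize (H2 t).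
    change (Rabs (hs n t - ft t) < eps).
    eapply Rle_lt_trans; [exact H2|].
    assert (Hn2 : / eps < INR n + 1).
    { apply le_INR in Hn. rewrite INR_IZR_INZ in Hn. rewrite Z2Nat.id in Hn.
      - lra.
      - apply le_IZR. pose proof (Rinv_0_lt_compat eps Heps). simpl. lra. }
    assert (0 < / eps) by (apply Rinv_0_lt_compat; lra).
    rewrite <- (Rinv_inv eps). apply Rinv_lt_contravar; [nra|exact Hn2].
  - exists If; exact HI.
Qed.

Lemma RInt_minus_c (g : R -> R) x y c : ex_RInt g x y -> RInt (fun u => g u - c) x y = RInt g x y - c * (y - x).
intros. pose proof (RInt_minus g (fun _ => c) x y H (ex_RInt_const _ _ _)) as E.
 rewrite RInt_const in E. 
 refine (eq_trans E _).
 unfold minus, plus, opp, scal; simpl. unfold mult; simpl. ring.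
Qed.
Lemma RInt_Ch (g : R -> R) x y z : ex_RInt g x y -> ex_RInt g y z -> RInt g x y + RInt g y z = RInt g x z.
intros. refine (RInt_Chasles g x y z _ _); auto. Qed.
Lemma RInt_sw (g : R -> R) x y : ex_RInt g x y -> RInt g y x = - RInt g x y.
intros H. symmetry. refine (opp_RInt_swap g x y H). Qed.
Lemma RInt_zero x y : RInt (fun _ => 0) x y = 0.
rewrite RInt_const. unfold scal; simpl; unfold mult; simpl. ring. Qed.
Lemma RInt_bound (g : R -> R) x y M : ex_RInt g x y ->
  (forall u, Rmin x y <= u <= Rmax x y -> Rabs (g u) <= M) -> Rabs (RInt g x y) <= M * Rabs (y - x).
Proof.
  intros Hi Hb. destruct (Rle_dec x y) as [Hxy|Hxy].
  - rewrite (Rabs_right (y - x)) by lra. rewrite Rmult_comm. apply abs_RInt_le_const; auto.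
    intros t Ht. apply Hb. rewrite Rmin_left, Rmax_right; lra.
  - assert (Hi2 : ex_RInt g y x) by (apply ex_RInt_swap; exact Hi).
    rewrite (RInt_sw g y x Hi2), Rabs_Ropp.
    rewrite (Rabs_left (y - x)) by lra. replace (- (y - x)) with (x - y) by ring. rewrite Rmult_comm.
    apply abs_RInt_le_const; auto; [lra|]. intros t Ht. apply Hb. rewrite Rmin_right, Rmax_left; lra.
Qed.

Lemma exI X a b f u v : good X a b -> rd_continuous X (kappa X) f -> a <= u <= b -> a <= v <= b ->
  ex_RInt (fun s => f (tau X a s)) u v.
Proof.
  intros HG Hf Hu Hv. pose proof (ex_RInt_ft X a b f HG Hf) as H.
  destruct (Rle_dec u v).
  - apply (ex_RInt_Chasles_1 (V := R_CompleteNormedModule)) with b; [lra|]. apply (ex_RInt_Chasles_2 (V := R_CompleteNormedModule)) with a; [lra|exact H].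
  - apply ex_RInt_swap. apply (ex_RInt_Chasles_1 (V := R_CompleteNormedModule)) with b; [lra|]. apply (ex_RInt_Chasles_2 (V := R_CompleteNormedModule)) with a; [lra|exact H].
Qed.

Lemma exists_antideriv X a b f : good X a b -> rd_continuous X (kappa X) f ->
  exists F, is_delta_antideriv X f F.
Proof.
  intros HG Hf.
  assert (Hab := proj2 (proj2 (proj2 (proj2 HG)))).
  assert (Xa : X a) by apply HG. assert (Xb : X b) by apply HG. assert (Hab0 : a < b) by apply HG.
  set (ft := fun s => f (tau X a s)).
  exists (fun t => RInt ft a t).
  intros t Kt eps Heps.
  assert (Xt : X t) by (apply Kt). pose proof (Hab t Xt) as Ht.
  set (sg := sigma X t). assert (Xsg : X sg) by (apply (sg_X X a b); auto).
  pose proof (Hab sg Xsg) as Hsg. assert (Htsg : t <= sg) by apply sg_ge.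
  assert (KEY : forall s, X s -> RInt ft a sg - RInt ft a s - f t * (sg - s) = RInt (fun u => ft u - f t) s sg).
  { intros s Xs. pose proof (Hab s Xs).
    rewrite RInt_minus_c by (apply (exI X a b f); auto).
    rewrite <- (RInt_Ch ft a s sg) by (apply (exI X a b f); auto; lra). ring. }
  destruct (Rle_lt_or_eq_dec _ _ Htsg) as [Hrs|Hrd].
  -
    assert (Htb : t < b).
    { destruct (Req_dec t b) as [->|]; [|lra]. unfold sg in Hrs. rewrite (sg_b X a b HG) in Hrs. lra. }
    destruct (loc_left X a b f HG Hf t 1 Rlt_0_1) as [dL [HdL [c Hc]]].
    set (K := Rabs (c - f t) + 1). assert (HK : 0 < K) by (unfold K; pose proof (Rabs_pos (c - f t)); lra).
    set (mu := sg - t). assert (Hmu : 0 < mu) by (unfold mu; lra).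
    assert (Hd3 : 0 < eps * mu / K) by (apply Rdiv_lt_0_compat; [apply Rmult_lt_0_compat|]; lra).
    exists (Rmin mu (Rmin dL (eps * mu / K))). split; [repeat apply Rmin_pos; lra|].
    intros s Xs Hts. pose proof (Hab s Xs).
    pose proof (Rmin_l mu (Rmin dL (eps * mu / K))) as Hm1.
    pose proof (Rmin_r mu (Rmin dL (eps * mu / K))) as Hm2.
    pose proof (Rmin_l dL (eps * mu / K)). pose proof (Rmin_r dL (eps * mu / K)).
    assert (Hst : s <= t).
    { destruct (Rle_dec s t) as [|Hn]; [assumption|]. exfalso.
      assert (sg <= s) by (apply sg_le; auto; lra). rewrite Rabs_left in Hts by lra. unfold mu in *. lra. }
    rewrite Rabs_right in Hts by lra.
    rewrite KEY by exact Xs.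
    assert (Hg1 : ex_RInt (fun u => ft u - f t) s t).
    { apply (ex_RInt_minus ft (fun _ => f t)); [apply (exI X a b f); auto; lra|apply ex_RInt_const]. }
    assert (Hg2 : ex_RInt (fun u => ft u - f t) t sg).
    { apply (ex_RInt_minus ft (fun _ => f t)); [apply (exI X a b f); auto; lra|apply ex_RInt_const]. }
    rewrite <- (RInt_Ch _ s t sg Hg1 Hg2).
    assert (Hz : RInt (fun u => ft u - f t) t sg = 0).
    { rewrite <- (RInt_zero t sg). apply RInt_ext. intros x Hx.
      rewrite Rmin_left in Hx by lra. rewrite Rmax_right in Hx by lra.
      unfold ft. rewrite (tau_rs X a b t x HG Xt) by (unfold sg in Hx; lra). apply Rminus_diag_eq; reflexivity. }
    rewrite Hz, Rplus_0_r.
    eapply Rle_trans; [apply (RInt_bound _ s t K Hg1)|].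
    + intros u Hu. rewrite Rmin_left in Hu by lra. rewrite Rmax_right in Hu by lra.
      destruct (Req_dec u t) as [->|Hne].
      * unfold ft. rewrite (tau_X X a b t HG Xt), Rminus_diag, Rabs_R0. lra.
      * specialize (Hc u ltac:(lra)). unfold K.
        replace (ft u - f t) with ((ft u - c) + (c - f t)) by ring.
        eapply Rle_trans; [apply Rabs_triang|]. unfold ft. lra.
    + rewrite Rabs_right by lra. rewrite (Rabs_right (sg - s)) by lra.
      assert (K * (t - s) <= eps * mu).
      { apply Rle_trans with (K * (eps * mu / K)). apply Rmult_le_compat_l; lra.
        right. field. lra. }
      assert (eps * mu <= eps * (sg - s)) by (apply Rmult_le_compat_l; unfold mu; lra).
      lra.
  -
    rewrite <- Hrd in *.
    destruct (proj1 (Hf t Kt) (eq_sym Hrd) eps Heps) as [d1 [Hd1 H2]].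
    assert (Hex : exists d, 0 < d /\ d <= d1 /\ (t < b -> d <= b - t)).
    { destruct (Rlt_dec t b).
      - exists (Rmin d1 (b - t)). split; [apply Rmin_pos; lra|]. split; [apply Rmin_l|intros; apply Rmin_r].
      - exists d1. split; [lra|split; [lra|intros; lra]]. }
    destruct Hex as [d [Hd [Hdd1 Hdb]]].
    exists d. split; [exact Hd|]. intros s Xs Hts. pose proof (Hab s Xs).
    rewrite KEY by exact Xs.
    assert (Hg1 : ex_RInt (fun u => ft u - f t) s t).
    { apply (ex_RInt_minus ft (fun _ => f t)); [apply (exI X a b f); auto; lra|apply ex_RInt_const]. }
    rewrite (Rabs_minus_sym t s).
    rewrite (Rabs_minus_sym s t). apply RInt_bound; [exact Hg1|].
    intros u Hu.
    assert (Htu : t <= tau X a u <= u \/ s <= tau X a u <= u).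
    { destruct (Rle_dec s t).
      - right. apply (tau_between X a b s u HG Xs). rewrite Rmin_left in Hu by lra. lra.
      - left. apply (tau_between X a b t u HG Xt). rewrite Rmin_right in Hu by lra. lra. }
    assert (Hmx : u <= Rmax s t) by lra. assert (Hmn : Rmin s t <= u) by lra.
    destruct (tau_spec X a b u HG) as (Xtu&_&_).
    destruct (Req_dec (tau X a u) t) as [He|Hne].
    + unfold ft. rewrite He, Rminus_diag, Rabs_R0. lra.
    + left. unfold ft. apply H2.
      * apply (kappa_lt X a b); auto.
        pose proof (Hab _ Xtu). destruct (Rle_lt_or_eq_dec _ _ (proj2 H0)) as [|Heq]; [assumption|].
        exfalso. assert (Htb : t < b) by lra. specialize (Hdb Htb).
        unfold Rmax, Rmin in *. destruct (Rle_dec s t); rewrite Rabs_left1 in Hts || rewrite Rabs_right in Hts; lra.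
      * unfold Rmax, Rmin in *. destruct (Rle_dec s t).
        -- rewrite Rabs_right in Hts by lra. rewrite Rabs_left1 by lra. lra.
        -- rewrite Rabs_left in Hts by lra. rewrite Rabs_right by lra. lra.
Qed.

Lemma comb_bound al be A B u v eps : 0 < eps ->
  Rabs (u - A) < eps / (Rabs al + Rabs be + 1) -> Rabs (v - B) < eps / (Rabs al + Rabs be + 1) ->
  Rabs (al * u + be * v - (al * A + be * B)) < eps.
Proof.
  intros He H1 H2. set (K := Rabs al + Rabs be + 1) in *.
  assert (HK : 0 < K) by (unfold K; pose proof (Rabs_pos al); pose proof (Rabs_pos be); lra).
  replace (al * u + be * v - (al * A + be * B)) with (al * (u - A) + be * (v - B)) by ring.
  eapply Rle_lt_trans; [apply Rabs_triang|]. rewrite !Rabs_mult.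
  set (e := eps / K) in *. assert (He2 : e * K = eps) by (unfold e; field; lra).
  assert (Rabs al * Rabs (u - A) <= Rabs al * e) by (apply Rmult_le_compat_l; [apply Rabs_pos|lra]).
  assert (Rabs be * Rabs (v - B) <= Rabs be * e) by (apply Rmult_le_compat_l; [apply Rabs_pos|lra]).
  assert (0 < e) by (unfold e; apply Rdiv_lt_0_compat; lra).
  unfold K in He2. nra.
Qed.

Lemma rd_lin X D f g al be : rd_continuous X D f -> rd_continuous X D g ->
  rd_continuous X D (fun x => al * f x + be * g x).
Proof.
  intros Hf Hg t Dt. destruct (Hf t Dt) as [Hf1 Hf2]. destruct (Hg t Dt) as [Hg1 Hg2].
  assert (HK : 0 < Rabs al + Rabs be + 1) by (pose proof (Rabs_pos al); pose proof (Rabs_pos be); lra).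
  split.
  - intros Hs eps Heps. set (e := eps / (Rabs al + Rabs be + 1)).
    assert (He : 0 < e) by (unfold e; apply Rdiv_lt_0_compat; lra).
    destruct (Hf1 Hs e He) as [d1 [Hd1 H1]]. destruct (Hg1 Hs e He) as [d2 [Hd2 H2]].
    exists (Rmin d1 d2). split; [apply Rmin_pos; lra|]. intros s Ds Hst.
    apply comb_bound; [lra|apply H1; auto; eapply Rlt_le_trans; [exact Hst|apply Rmin_l]|
      apply H2; auto; eapply Rlt_le_trans; [exact Hst|apply Rmin_r]].
  - intros Hr. destruct (Hf2 Hr) as [L1 HL1]. destruct (Hg2 Hr) as [L2 HL2].
    exists (al * L1 + be * L2). intros eps Heps. set (e := eps / (Rabs al + Rabs be + 1)).
    assert (He : 0 < e) by (unfold e; apply Rdiv_lt_0_compat; lra).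
    destruct (HL1 e He) as [d1 [Hd1 H1]]. destruct (HL2 e He) as [d2 [Hd2 H2]].
    exists (Rmin d1 d2). split; [apply Rmin_pos; lra|]. intros s Ds Hst.
    pose proof (Rmin_l d1 d2). pose proof (Rmin_r d1 d2).
    apply comb_bound; [lra|apply H1; auto; lra|apply H2; auto; lra].
Qed.

Lemma rd_const X D k : rd_continuous X D (fun _ => k).
Proof.
  intros t Dt. split.
  - intros _ eps Heps. exists 1. split; [lra|]. intros. rewrite Rminus_diag, Rabs_R0; lra.
  - intros _. exists k. intros eps Heps. exists 1. split; [lra|]. intros. rewrite Rminus_diag, Rabs_R0; lra.
Qed.

Lemma xlnx_cont x0 : 0 <= x0 -> forall eps, 0 < eps -> exists d, 0 < d /\
  forall x, 0 < x -> Rabs (x - x0) < d -> Rabs (x * ln x - x0 * ln x0) < eps.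
Proof.
  intros Hx0 eps Heps. destruct (Rle_lt_or_eq_dec _ _ Hx0) as [Hp|Hz].
  - set (e1 := eps / (2 * (x0 + 1))). assert (He1 : 0 < e1) by (unfold e1; apply Rdiv_lt_0_compat; lra).
    destruct (ln_continue x0 Hp e1 He1) as [al [Hal H]].
    set (e2 := eps / (2 * (Rabs (ln x0) + 1))).
    assert (He2 : 0 < e2) by (unfold e2; apply Rdiv_lt_0_compat; pose proof (Rabs_pos (ln x0)); lra).
    exists (Rmin al (Rmin 1 e2)). split; [repeat apply Rmin_pos; lra|].
    intros x Hx Hxx. pose proof (Rmin_l al (Rmin 1 e2)). pose proof (Rmin_r al (Rmin 1 e2)).
    pose proof (Rmin_l 1 e2). pose proof (Rmin_r 1 e2).
    assert (Hl : Rabs (ln x - ln x0) < e1).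
    { destruct (Req_dec x0 x) as [->|Hne]; [rewrite Rminus_diag, Rabs_R0; lra|].
      apply (H x). split; [split; auto|]. simpl. unfold Rdist. lra. }
    replace (x * ln x - x0 * ln x0) with (x * (ln x - ln x0) + (x - x0) * ln x0) by ring.
    eapply Rle_lt_trans; [apply Rabs_triang|]. rewrite !Rabs_mult.
    assert (Hxb : Rabs x <= x0 + 1) by (rewrite Rabs_right by lra; pose proof (Rle_abs (x - x0)); lra).
    assert (Rabs x * Rabs (ln x - ln x0) <= (x0 + 1) * e1).
    { apply Rmult_le_compat; try apply Rabs_pos; lra. }
    assert ((x0 + 1) * e1 = eps / 2) by (unfold e1; field; lra).
    assert (Rabs (x - x0) * Rabs (ln x0) <= e2 * Rabs (ln x0)).
    { apply Rmult_le_compat_r; [apply Rabs_pos|lra]. }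
    assert (e2 * Rabs (ln x0) < eps / 2).
    { unfold e2. pose proof (Rabs_pos (ln x0)).
      apply Rmult_lt_reg_r with (2 * (Rabs (ln x0) + 1)); [lra|].
      replace (eps / (2 * (Rabs (ln x0) + 1)) * Rabs (ln x0) * (2 * (Rabs (ln x0) + 1))) with (eps * Rabs (ln x0)) by (field; lra).
      nra. }
    lra.
  - subst x0. exists (Rmin 1 (eps * eps / 4)). split; [apply Rmin_pos; [lra|nra]|].
    intros x Hx Hxx. pose proof (Rmin_l 1 (eps * eps / 4)). pose proof (Rmin_r 1 (eps * eps / 4)).
    rewrite Rminus_0_r, Rabs_right in Hxx by lra. rewrite Rmult_0_l, Rminus_0_r.
    assert (Hln : ln x < 0) by (rewrite <- ln_1; apply ln_increasing; lra).
    set (v := - ln x). set (E := exp (v / 2)).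
    assert (HE : 1 + v / 2 <= E) by apply exp_ineq1_le.
    assert (HxE : x * (E * E) = 1).
    { unfold E. rewrite <- exp_plus. replace (v / 2 + v / 2) with (- ln x) by (unfold v; field).
      rewrite exp_Ropp, exp_ln by lra. field. lra. }
    rewrite Rabs_left by nra.
    replace (- (x * ln x)) with (x * v) by (unfold v; ring).
    assert (Hv : 0 < v) by (unfold v; lra).
    assert (H1 : 0 < x * v) by (apply Rmult_lt_0_compat; lra).
    assert (H2 : x * v < 2 * x * E) by nra.
    assert (H3 : (x * v) * (x * v) < 4 * x) by nra.
    nra.
Qed.

Lemma rd_comp X D p : (forall x, D x -> 0 < p x) -> rd_continuous X D p ->
  rd_continuous X D (fun x => p x * ln (p x)).
Proof.
  intros Hp Hc t Dt. destruct (Hc t Dt) as [H1 H2]. split.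
  - intros Hs eps Heps. destruct (xlnx_cont (p t) ltac:(left; apply Hp; auto) eps Heps) as [d [Hd Hh]].
    destruct (H1 Hs d Hd) as [d1 [Hd1 Hq]]. exists d1. split; [auto|]. intros s Ds Hst.
    apply Hh; [apply Hp; auto|apply Hq; auto].
  - intros Hr. destruct (classic (exists d0, 0 < d0 /\ forall s, D s -> ~ (t - d0 < s < t))) as [[d0 [Hd0 Hno]]|Hacc].
    + exists 0. intros eps Heps. exists d0. split; [auto|]. intros s Ds Hs. exfalso; apply (Hno s Ds Hs).
    + destruct (H2 Hr) as [L HL].
      assert (HL0 : 0 <= L).
      { destruct (Rle_dec 0 L) as [|Hn]; [auto|exfalso]. apply Rnot_le_lt in Hn.
        destruct (HL (- L)) as [d [Hd Hq]]; [lra|].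
        apply Hacc. exists d. split; [auto|]. intros s Ds Hs. specialize (Hq s Ds Hs).
        specialize (Hp s Ds). rewrite Rabs_right in Hq by lra. lra. }
      exists (L * ln L). intros eps Heps. destruct (xlnx_cont L HL0 eps Heps) as [d [Hd Hh]].
      destruct (HL d Hd) as [d1 [Hd1 Hq]]. exists d1. split; [auto|]. intros s Ds Hs.
      apply Hh; [apply Hp; auto|apply Hq; auto].
Qed.

Lemma tangent x C : 0 < x -> 0 < C -> C * ln C + (1 + ln C) * (x - C) <= x * ln x.
Proof.
  intros Hx HC.
  assert (Hy : 0 < C * / x) by (apply Rmult_lt_0_compat; [lra|apply Rinv_0_lt_compat; lra]).
  pose proof (exp_ineq1_le (ln (C * / x))) as H. rewrite exp_ln in H by exact Hy.
  rewrite ln_mult, ln_Rinv in H by (try apply Rinv_0_lt_compat; lra).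
  assert (x * (1 + (ln C + - ln x)) <= x * (C * / x)) by (apply Rmult_le_compat_l; lra).
  replace (x * (C * / x)) with C in H0 by (field; lra). nra.
Qed.

Lemma deriv_const X t k : is_delta_deriv X (fun _ => k) t 0.
Proof.
  intros eps Heps. exists 1. split; [lra|]. intros s _ _.
  replace (k - k - 0 * (sigma X t - s)) with 0 by ring. rewrite Rabs_R0.
  apply Rmult_le_pos; [lra|apply Rabs_pos].
Qed.

Lemma deriv_id X t : is_delta_deriv X (fun x => x) t 1.
Proof.
  intros eps Heps. exists 1. split; [lra|]. intros s _ _.
  replace (sigma X t - s - 1 * (sigma X t - s)) with 0 by ring. rewrite Rabs_R0.
  apply Rmult_le_pos; [lra|apply Rabs_pos].
Qed.

Lemma good_tsI T a b : time_scale T -> T a -> T b -> a < b -> good (tsI T a b) a b.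
Proof.
  intros [_ HT] Ta Tb Hab. split; [|split; [|split; [|split]]].
  - intros x Hx. split.
    + apply HT. intros eps Heps. destruct (Hx eps Heps) as [y [[Ty _] Hy]]. exists y; split; auto.
    + split.
      * destruct (Rle_dec a x) as [|Hn]; [auto|exfalso]. apply Rnot_le_lt in Hn.
        destruct (Hx (a - x)) as [y [[_ Hy1] Hy]]; [lra|]. pose proof (Rle_abs (y - x)). lra.
      * destruct (Rle_dec x b) as [|Hn]; [auto|exfalso]. apply Rnot_le_lt in Hn.
        destruct (Hx (x - b)) as [y [[_ Hy1] Hy]]; [lra|]. pose proof (Rle_abs (-(y - x))). rewrite Rabs_Ropp in H. lra.
  - split; [auto|lra].
  - split; [auto|lra].
  - auto.
  - intros u [_ Hu]; exact Hu.
Qed.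

Theorem theorem3p6 (T : R -> Prop) (a b B : R) (phi : R -> R) :
  time_scale T -> T a -> T b -> a < b ->
  (forall t, kappa (tsI T a b) t -> 0 < phi t) ->
  rd_continuous (tsI T a b) (kappa (tsI T a b)) phi ->
  (forall t, kappa (tsI T a b) t ->
     (B + delta_int (tsI T a b) phi a b) / (b - a) > phi t) ->
  (* the extremal y is admissible and attains (b-a) C ln C *)
  (exists yd0 : R -> R,
     C1rd (tsI T a b)
       (fun t => (B + delta_int (tsI T a b) phi a b) / (b - a) * (t - a)
                 - delta_int (tsI T a b) phi a t) yd0 /\
     (forall t, kappa (tsI T a b) t -> 0 < yd0 t) /\
     (B + delta_int (tsI T a b) phi a b) / (b - a) * (a - a)
       - delta_int (tsI T a b) phi a a = 0 /\
     (B + delta_int (tsI T a b) phi a b) / (b - a) * (b - a)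
       - delta_int (tsI T a b) phi a b = B /\
     Ffun (tsI T a b) phi yd0 a b =
       (b - a) * ((B + delta_int (tsI T a b) phi a b) / (b - a))
         * ln ((B + delta_int (tsI T a b) phi a b) / (b - a))) /\
  (* it is a minimum among all admissible y *)
  (forall y yd : R -> R,
     C1rd (tsI T a b) y yd ->
     (forall t, kappa (tsI T a b) t -> 0 < yd t) ->
     y a = 0 -> y b = B ->
     (b - a) * ((B + delta_int (tsI T a b) phi a b) / (b - a))
       * ln ((B + delta_int (tsI T a b) phi a b) / (b - a))
     <= Ffun (tsI T a b) phi yd a b).
Proof.
  intros HT Ta Tb Hab Hpos Hrd HCgt.
  pose proof (good_tsI T a b HT Ta Tb Hab) as HG.
  set (X := tsI T a b) in *.
  set (I := delta_int X phi a b) in *.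
  set (C := (B + I) / (b - a)) in *.
  assert (Xa : X a) by apply HG. assert (Xb : X b) by apply HG.
  destruct (exists_antideriv X a b phi HG Hrd) as [Phi HPhi].
  assert (Hspec : forall t, X t -> delta_int X phi a t = Phi t - Phi a).
  { intros t Xt. apply (delta_int_spec X a b); auto. }
  assert (HI : I = Phi b - Phi a) by (apply Hspec; auto).
  assert (Ka : kappa X a) by (apply (kappa_lt X a b); auto).
  assert (HC0 : 0 < C) by (pose proof (HCgt a Ka); pose proof (Hpos a Ka); lra).
  assert (HCb : C * (b - a) = B + I) by (unfold C; field; lra).
  split.
  - exists (fun t => C - phi t). split; [split|split; [|split; [|split]]].
    + intros t Kt. assert (Xt : X t) by apply Kt.
      assert (Hd : is_delta_deriv X (fun x => 1 * (C * x + -1 * Phi x) + (C * - a + Phi a) * 1) t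
                     (1 * (C * 1 + -1 * phi t) + (C * - a + Phi a) * 0)).
      { apply deriv_lin; [apply deriv_lin; [apply deriv_id|apply HPhi; auto]|apply deriv_const]. }
      replace (C - phi t) with (1 * (C * 1 + -1 * phi t) + (C * - a + Phi a) * 0) by ring.
      eapply deriv_ext; [|apply (sg_X X a b); auto|exact Hd].
      intros u Xu. simpl. rewrite (Hspec u Xu). ring.
    + assert (H := rd_lin X (kappa X) (fun _ => C) phi 1 (-1) (rd_const X (kappa X) C) Hrd).
      replace (fun t => C - phi t) with (fun x => 1 * C + -1 * phi x); [exact H|].
      apply functional_extensionality; intros; ring.
    + intros t Kt. pose proof (HCgt t Kt). lra.
    + rewrite (Hspec a Xa). ring.
    + fold I. rewrite HCb. ring.
    + unfold Ffun.
      rewrite (delta_int_spec X a b _ (fun x => (C * ln C) * x + 0 * 1)); auto.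
      * ring.
      * intros t Kt. replace ((phi t + (C - phi t)) * ln (phi t + (C - phi t))) with ((C * ln C) * 1 + 0 * 0).
        -- apply deriv_lin; [apply deriv_id|apply deriv_const].
        -- replace (phi t + (C - phi t)) with C by ring. ring.
  - intros y yd [Hyd Hydc] Hydp Hya Hyb.
    set (g := fun t => (phi t + yd t) * ln (phi t + yd t)).
    assert (Hgc : rd_continuous X (kappa X) g).
    { assert (Hp := rd_lin X (kappa X) phi yd 1 1 Hrd Hydc).
      replace (fun x => 1 * phi x + 1 * yd x) with (fun x => phi x + yd x) in Hp
        by (apply functional_extensionality; intros; ring).
      apply (rd_comp X (kappa X) (fun x => phi x + yd x)); [|exact Hp].
      intros x Kx. pose proof (Hpos x Kx). pose proof (Hydp x Kx). lra. }
    destruct (exists_antideriv X a b g HG Hgc) as [G HGd].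
    unfold Ffun. fold g. rewrite (delta_int_spec X a b g G a b HG HGd Xa Xb).
    set (K1 := C * ln C). set (K2 := 1 + ln C).
    set (H := fun x => 1 * G x + -1 * ((K1 - K2 * C) * x + K2 * (1 * Phi x + 1 * y x))).
    assert (Hmono : H a <= H b).
    { apply (mono X a b H a b HG); auto; [|lra].
      intros t Kt. assert (Xt : X t) by apply Kt.
      exists (1 * g t + -1 * ((K1 - K2 * C) * 1 + K2 * (1 * phi t + 1 * yd t))). split.
      - pose proof (tangent (phi t + yd t) C ltac:(pose proof (Hpos t Kt); pose proof (Hydp t Kt); lra) HC0).
        unfold g, K1, K2. lra.
      - unfold H. apply deriv_lin; [apply HGd; auto|].
        apply deriv_lin; [apply deriv_id|]. apply deriv_lin; [apply HPhi; auto|apply Hyd; auto]. }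
    unfold H in Hmono. rewrite Hya, Hyb in Hmono.
    assert (Hbr : Phi b - Phi a + B - C * (b - a) = 0) by lra.
    assert (E : G b - G a - (b - a) * C * ln C =
                (1 * G b + -1 * ((K1 - K2 * C) * b + K2 * (1 * Phi b + 1 * B)) -
                 (1 * G a + -1 * ((K1 - K2 * C) * a + K2 * (1 * Phi a + 1 * 0))))
                + K2 * (Phi b - Phi a + B - C * (b - a))) by (unfold K1, K2; ring).
    rewrite Hbr in E. lra.
Qed.
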